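(* Let $\mathbf w\in\mathbb R^m$ and let $X,Y$ be distinct candidates. The following are equivalent: (i) for all profiles $\mathbf p,\mathbf q\in P$ with $\mathbf p\sim_{X,Y}\mathbf q$, $\mathbf p\cdot\mathbf v_{X>Y}>0$ implies $\mathbf q\cdot\mathbf v_{X>Y}>0$; (ii) every $T\in SO(P)$ with $T(\mathbf r_{X>Y})=\mathbf r_{X>Y}$ satisfies $T\big((\mathbf v_{X>Y})_+\big)\subseteq(\mathbf v_{X>Y})_+$.
   Context: Fix an integer $n\ge 2$ and a set $\mathbf C$ of $n$ candidates. Fix a composition $\lambda=(\lambda_1,\dots,\lambda_m)$ of $n$ (positive integers with $\sum_i\lambda_i=n$), write $|\lambda|=m$ and $[m]=\{1,\dots,m\}$. A ballot is a function $b:\mathbf C\to[m]$ with $|b^{-1}(i)|=\lambda_i$ for every $i$; $\mathbf C_\lambda$ denotes the set of ballots. The profile space is $P=\mathbb R^{\mathbf C_\lambda}$ with basis $\{\delta_b\}$ (indicator functions) and inner product $\mathbf p\cdot\mathbf q=\sum_b\mathbf p(b)\mathbf q(b)$; $\mathbf 1=\sum_b\delta_b$. For candidates $X,Y$: $\mathbf a_{X>Y}=\sum_{b:\,b(X)<b(Y)}\delta_b$, $\mathbf r_{X>Y}=\mathbf a_{X>Y}-\mathbf a_{Y>X}$. For $\mathbf w\in\mathbb R^m$ (a function $[m]\to\mathbb R$), $\mathbf v_X\in P$ is $\mathbf v_X(b)=\mathbf w(b(X))$ and $\mathbf v_{X>Y}=\mathbf v_X-\mathbf v_Y$. For $\mathbf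 v\in P$, $(\mathbf v)_+=\{\mathbf u\in P:\mathbf u\cdot\mathbf v>0\}$. Two profiles are $X,Y$-equivalent, $\mathbf p\sim_{X,Y}\mathbf q$, if $(\mathbf p-\mathbf q)\cdot\mathbf a_{X>Y}=0$ and $(\mathbf p-\mathbf q)\cdot\mathbf a_{Y>X}=0$. $SO(P)$ denotes the group of linear isometries of $P$ of determinant $1$. *)

(* Defs.v *)
From HB Require Import structures.
From mathcomp Require Import all_boot all_order all_algebra.
Set Implicit Arguments. Unset Strict Implicit. Unset Printing Implicit Defensive.
Import Order.TTheory GRing.Theory Num.Theory.
Local Open Scope ring_scope.

Section Voting.
Variables (R : rcfType) (C : finType) (lam : seq nat).

(* [m] = {1..m} is represented by 'I_m = {0..m-1}, m = size lam;
   position i (0-based) has prescribed size nth 0 lam i. *)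
Definition is_ballot (b : {ffun C -> 'I_(size lam)}) : bool :=
  [forall i : 'I_(size lam), #|[set c | b c == i]| == nth 0%N lam i].

Definition ballot := {b : {ffun C -> 'I_(size lam)} | is_ballot b}.

(* Profile space P = R^{C_lam}, coordinates indexed through enum_val. *)
Definition profile := 'rV[R]_#|{: ballot}|.

Definition pdot (p q : profile) : R := \sum_(j < #|{: ballot}|) p 0 j * q 0 j.

Definition of_fun (f : ballot -> R) : profile := \row_j f (enum_val j).

Definition aprof (X Y : C) : profile :=
  of_fun (fun b => if (val b X < val b Y)%N then 1 else 0).

Definition rprof (X Y : C) : profile := aprof X Y - aprof Y X.

Definition vprof (w : 'I_(size lam) -> R) (X : C) : profile :=
  of_fun (fun b => w (val b X)).

Definition vprof2 (w : 'I_(size lam) -> R) (X Y : C) : profile :=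
  vprof w X - vprof w Y.

Definition pos_half (v : profile) (u : profile) : Prop := 0 < pdot u v.

Definition xy_equiv (X Y : C) (p q : profile) : Prop :=
  pdot (p - q) (aprof X Y) = 0 /\ pdot (p - q) (aprof Y X) = 0.

Definition act (T : 'M[R]_#|{: ballot}|) (p : profile) : profile := p *m T.

Definition in_SO (T : 'M[R]_#|{: ballot}|) : Prop :=
  (forall p q : profile, pdot (act T p) (act T q) = pdot p q) /\ \det T = 1.

End Voting.

(* Main.v *)
Require Import Defs.
From HB Require Import structures.
From mathcomp Require Import all_boot all_order all_algebra.
From mathcomp Require Import fingroup perm ring.
Import Order.TTheory GRing.Theory Num.Theory.
Local Open Scope ring_scope.
Set Implicit Arguments. Unset Strict Implicit.

Lemma pdotDl (R : rcfType) (C : finType) (lam : seq nat) (p q r : profile R C lam) :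
  pdot (p + q) r = pdot p r + pdot q r.
Proof. by rewrite /pdot -big_split; apply: eq_bigr => j _; rewrite !mxE mulrDl. Qed.

Lemma pdotNl (R : rcfType) (C : finType) (lam : seq nat) (p r : profile R C lam) :
  pdot (- p) r = - pdot p r.
Proof. by rewrite /pdot -sumrN; apply: eq_bigr => j _; rewrite !mxE mulNr. Qed.

Lemma pdotBl (R : rcfType) (C : finType) (lam : seq nat) (p q r : profile R C lam) :
  pdot (p - q) r = pdot p r - pdot q r.
Proof. by rewrite pdotDl pdotNl. Qed.

Lemma pdotZl (R : rcfType) (C : finType) (lam : seq nat) (a : R) (p r : profile R C lam) :
  pdot (a *: p) r = a * pdot p r.
Proof. by rewrite /pdot mulr_sumr; apply: eq_bigr => j _; rewrite !mxE mulrA. Qed.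

Lemma pdotC (R : rcfType) (C : finType) (lam : seq nat) (p r : profile R C lam) :
  pdot p r = pdot r p.
Proof. by rewrite /pdot; apply: eq_bigr => j _; rewrite mulrC. Qed.

Lemma pdotZr (R : rcfType) (C : finType) (lam : seq nat) (a : R) (p r : profile R C lam) :
  pdot p (a *: r) = a * pdot p r.
Proof. by rewrite pdotC pdotZl pdotC. Qed.

Lemma pdot_delta (R : rcfType) (C : finType) (lam : seq nat) j (r : profile R C lam) :
  pdot (delta_mx 0 j) r = r 0 j.
Proof.
rewrite /pdot (bigD1 j) //= big1 ?addr0; first by rewrite mxE !eqxx mul1r.
by move=> k /negbTE nk; rewrite mxE nk andbF mul0r.
Qed.

Lemma mul_permE (R : rcfType) n (p : 'rV[R]_n) (s : {perm 'I_n}) j :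
  (p *m perm_mx s) 0 j = p 0 ((s^-1)%g j).
Proof. by rewrite -[s in perm_mx s]invgK -col_permE mxE. Qed.

Lemma pdot_perm (R : rcfType) (C : finType) (lam : seq nat) (s : {perm 'I_#|{: ballot C lam}|})
  (p q : profile R C lam) :
  pdot (p *m perm_mx s) (q *m perm_mx s) = pdot p q.
Proof.
rewrite /pdot (reindex_inj (@perm_inj _ s)) /=.
by apply: eq_bigr => j _; rewrite !mul_permE permK.
Qed.

Lemma pdot_perm1 (R : rcfType) (C : finType) (lam : seq nat) (s : {perm 'I_#|{: ballot C lam}|})
  (p q : profile R C lam) :
  pdot (p *m perm_mx s) q = \sum_j p 0 j * q 0 (s j).
Proof.
rewrite /pdot (reindex_inj (@perm_inj _ s)) /=.
by apply: eq_bigr => j _; rewrite !mul_permE permK.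
Qed.

Lemma tperm_inv_val (R : rcfType) n (g : 'rV[R]_n) x y k :
  g 0 x = g 0 y -> g 0 (tperm x y k) = g 0 k.
Proof. by move=> e; case: tpermP => // ->. Qed.

Lemma ltn_asymF m n : (m < n)%N -> (n < m)%N = false.
Proof. by move=> h; apply/negbTE; rewrite -leqNgt ltnW. Qed.

Lemma swb_proof (C : finType) (lam : seq nat) (X Y : C) (b : ballot C lam) :
  is_ballot ([ffun c => val b (tperm X Y c)] : {ffun C -> 'I_(size lam)}).
Proof.
case: b => b /= /forallP hb; apply/forallP => i.
have -> : [set c | [ffun c => b (tperm X Y c)] c == i] = tperm X Y @^-1: [set c | b c == i].
  by apply/setP => c; rewrite !inE ffunE.
by rewrite card_preimset; [exact: hb | exact: perm_inj].
Qed.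

Definition swb (C : finType) (lam : seq nat) (X Y : C) (b : ballot C lam) : ballot C lam :=
  exist (@is_ballot C lam) _ (swb_proof X Y b).

Lemma swbX (C : finType) (lam : seq nat) (X Y : C) (b : ballot C lam) :
  val (swb X Y b) X = val b Y.
Proof. by rewrite /= ffunE tpermL. Qed.

Lemma swbY (C : finType) (lam : seq nat) (X Y : C) (b : ballot C lam) :
  val (swb X Y b) Y = val b X.
Proof. by rewrite /= ffunE tpermR. Qed.

Definition vf (R : rcfType) (C : finType) (lam : seq nat) (w : 'I_(size lam) -> R) (X Y : C)
  (b : ballot C lam) : R := w (val b X) - w (val b Y).

Lemma vprof2E (R : rcfType) (C : finType) (lam : seq nat) (w : 'I_(size lam) -> R) (X Y : C) j :
  vprof2 w X Y 0 j = vf w X Y (enum_val j).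
Proof. by rewrite /vprof2 /vprof /of_fun !mxE. Qed.

Lemma rprofE (R : rcfType) (C : finType) (lam : seq nat) (X Y : C) j :
  rprof R lam X Y 0 j = (if (val (enum_val j) X < val (enum_val j) Y)%N then 1 else 0)
    - (if (val (enum_val j) Y < val (enum_val j) X)%N then 1 else 0).
Proof. by rewrite /rprof /aprof /of_fun !mxE. Qed.

Definition Const (R : rcfType) (C : finType) (lam : seq nat) (w : 'I_(size lam) -> R) (X Y : C) :=
  forall b1 b2 : ballot C lam, (val b1 X < val b1 Y)%N -> (val b2 X < val b2 Y)%N ->
    vf w X Y b1 = vf w X Y b2.

Lemma const_span (R : rcfType) (C : finType) (lam : seq nat) (w : 'I_(size lam) -> R) (X Y : C) :
  Const w X Y -> exists a : R, vprof2 w X Y = a *: rprof R lam X Y.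
Proof.
move=> hc.
exists (if [pick b : ballot C lam | (val b X < val b Y)%N] is Some b0 then vf w X Y b0 else 0).
apply/rowP => j; rewrite vprof2E mxE rprofE.
set b := enum_val j.
case: ltngtP => h.
- case: pickP => [b0 h0|/(_ b)]; last by rewrite h.
  by rewrite subr0 mulr1; apply: hc.
- have hs : (val (swb X Y b) X < val (swb X Y b) Y)%N by rewrite swbX swbY.
  case: pickP => [b0 h0|/(_ (swb X Y b))]; last by rewrite hs.
  rewrite sub0r mulrN1 -(hc _ _ hs h0) /vf swbX swbY.
  by rewrite opprB.
- have e : val b X = val b Y by apply: val_inj.
  by rewrite /vf e !subrr mulr0.
Qed.

Lemma span_i (R : rcfType) (C : finType) (lam : seq nat) (w : 'I_(size lam) -> R) (X Y : C) a :
  vprof2 w X Y = a *: rprof R lam X Y ->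
  (forall p q : profile R C lam, xy_equiv X Y p q ->
     0 < pdot p (vprof2 w X Y) -> 0 < pdot q (vprof2 w X Y)).
Proof.
move=> e p q [h1 h2]; suff -> : pdot q (vprof2 w X Y) = pdot p (vprof2 w X Y) by [].
apply/eqP; rewrite eq_sym -subr_eq0 -pdotBl e pdotZr /rprof.
rewrite pdotC pdotBl pdotC h1 pdotC h2 subrr mulr0 //.
Qed.

Lemma span_ii (R : rcfType) (C : finType) (lam : seq nat) (w : 'I_(size lam) -> R) (X Y : C) a :
  vprof2 w X Y = a *: rprof R lam X Y ->
  (forall T : 'M[R]_#|{: ballot C lam}|, in_SO T ->
     act T (rprof R lam X Y) = rprof R lam X Y ->
     forall u : profile R C lam, pos_half (vprof2 w X Y) u ->
       pos_half (vprof2 w X Y) (act T u)).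
Proof.
move=> e T [iso _] hr u; rewrite /pos_half e !pdotZr.
by rewrite -{2}hr iso.
Qed.

Lemma i_const (R : rcfType) (C : finType) (lam : seq nat) (w : 'I_(size lam) -> R) (X Y : C) :
  (forall p q : profile R C lam, xy_equiv X Y p q ->
     0 < pdot p (vprof2 w X Y) -> 0 < pdot q (vprof2 w X Y)) -> Const w X Y.
Proof.
move=> hi b1 b2 h1 h2; apply/eqP; apply/negPn/negP => ne.
set c := vf w X Y b1 - vf w X Y b2.
have cne : c != 0 by rewrite subr_eq0.
pose p : profile R C lam := c *: (delta_mx 0 (enum_rank b1) - delta_mx 0 (enum_rank b2)).
have : 0 < pdot 0 (vprof2 w X Y).
  apply: (hi p).
    by split; rewrite subr0 pdotZl pdotBl !pdot_delta /aprof /of_fun !mxE !enum_rankK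
       ?h1 ?h2 ?(ltn_asymF h1) ?(ltn_asymF h2) subrr mulr0.
  by rewrite pdotZl pdotBl !pdot_delta !vprof2E !enum_rankK -/c -expr2 exprn_even_gt0.
by rewrite /pdot big1 ?ltxx // => j _; rewrite mxE mul0r.
Qed.

Lemma ii_const (R : rcfType) (C : finType) (lam : seq nat) (w : 'I_(size lam) -> R) (X Y : C) :
  (forall T : 'M[R]_#|{: ballot C lam}|, in_SO T ->
     act T (rprof R lam X Y) = rprof R lam X Y ->
     forall u : profile R C lam, pos_half (vprof2 w X Y) u ->
       pos_half (vprof2 w X Y) (act T u)) -> Const w X Y.
Proof.
move=> hii b1 b2 h1 h2; apply/eqP; apply/negPn/negP => ne.
set c := vf w X Y b1 - vf w X Y b2.
have cne : c != 0 by rewrite subr_eq0.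
set j1 := enum_rank b1; set j2 := enum_rank b2.
set j3 := enum_rank (swb X Y b1); set j4 := enum_rank (swb X Y b2).
have h3 : (val (swb X Y b1) Y < val (swb X Y b1) X)%N by rewrite swbX swbY.
have h4 : (val (swb X Y b2) Y < val (swb X Y b2) X)%N by rewrite swbX swbY.
have n12 : j1 != j2 by apply: contraNneq ne => /enum_rank_inj ->.
have dif : forall b b' : ballot C lam, (val b X < val b Y)%N -> (val b' Y < val b' X)%N ->
    enum_rank b != enum_rank b'.
  move=> b b' hb hb'; apply/negP => /eqP /enum_rank_inj E; move: hb hb'; rewrite E => hb hb'.
  by move: (ltn_trans hb hb'); rewrite ltnn.
have n34 : j3 != j4.
  apply: contraNneq ne => /enum_rank_inj E.
  have : val (swb X Y b1) Y = val (swb X Y b2) Y by rewrite E.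
  have : val (swb X Y b1) X = val (swb X Y b2) X by rewrite E.
  rewrite !swbX !swbY /vf => -> -> //.
have n13 := dif _ _ h1 h3; have n14 := dif _ _ h1 h4.
have n23 := dif _ _ h2 h3; have n24 := dif _ _ h2 h4.
pose s : {perm 'I_#|{: ballot C lam}|} := (tperm j1 j2 * tperm j3 j4)%g.
have sj1 : s j1 = j2 by rewrite permM tpermL tpermD // eq_sym.
have sj2 : s j2 = j1 by rewrite permM tpermR tpermD // eq_sym.
have rs : forall k, rprof R lam X Y 0 (s k) = rprof R lam X Y 0 k.
  move=> k; rewrite permM; rewrite tperm_inv_val ?tperm_inv_val //;
  by rewrite !rprofE !enum_rankK ?h1 ?h2 ?h3 ?h4 ?(ltn_asymF h1) ?(ltn_asymF h2) ?(ltn_asymF h3) ?(ltn_asymF h4).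
have SO : in_SO (perm_mx (R:=R) s).
  split; first by move=> p q; rewrite /act pdot_perm.
  by rewrite det_perm odd_mul_tperm odd_tperm n12 n34.
pose u : profile R C lam := c *: (delta_mx 0 j1 - delta_mx 0 j2).
have hu : pos_half (vprof2 w X Y) u.
  rewrite /pos_half pdotZl pdotBl !pdot_delta !vprof2E !enum_rankK -/c.
  by rewrite -expr2 exprn_even_gt0.
have := hii (perm_mx s) SO _ u hu.
have -> : act (perm_mx s) (rprof R lam X Y) = rprof R lam X Y.
  apply/rowP => k; rewrite /act mul_permE -{2}(permKV s k) rs //.
move=> /(_ erefl); rewrite /pos_half /act pdot_perm1.
rewrite (eq_bigr (fun k => c * ((k == j1)%:R - (k == j2)%:R) * vprof2 w X Y 0 (s k))); last first.
  by move=> k _; rewrite !mxE /= [k == j1]eq_sym [k == j2]eq_sym.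
rewrite (bigD1 j1) //= (bigD1 j2) 1?eq_sym //= big1; last first.
  by move=> k /andP [nk1 nk2]; rewrite (negbTE nk1) (negbTE nk2) subrr mulr0 mul0r.
rewrite !eqxx eq_sym (negbTE n12) sj1 sj2 !vprof2E !enum_rankK.
move: cne; rewrite /c; move: (vf w X Y b1) (vf w X Y b2) => x y nz H.
have : 0 < (x - y) ^+ 2 by rewrite exprn_even_gt0.
move: H; rewrite subr0 sub0r mulr1 mulrN1 addr0 => H1 H2.
have E : (x - y) * y + (- (x - y) * x) = - (x - y) ^+ 2 by ring.
by move: H1; rewrite E oppr_gt0 ltNge (ltW H2).
Qed.

Theorem mainTheorem7 (R : rcfType) (C : finType) (lam : seq nat)
  (hn : (2 <= #|C|)%N)
  (hpos : all (fun k => 0 < k)%N lam) (hsum : sumn lam = #|C|)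
  (w : 'I_(size lam) -> R) (X Y : C) (hXY : X != Y) :
  (forall p q : profile R C lam, xy_equiv X Y p q ->
     0 < pdot p (vprof2 w X Y) -> 0 < pdot q (vprof2 w X Y))
  <->
  (forall T : 'M[R]_#|{: ballot C lam}|, in_SO T ->
     act T (rprof R lam X Y) = rprof R lam X Y ->
     forall u : profile R C lam, pos_half (vprof2 w X Y) u ->
       pos_half (vprof2 w X Y) (act T u)).
Proof.
split=> h.
- by have [a e] := const_span (i_const h); exact: span_ii e.
- by have [a e] := const_span (ii_const h); exact: span_i e.
Qed.
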